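(* Let $k$ be an algebraically closed field of characteristic zero, $n\ge1$, $q\in k$ a primitive $2n$-th root of unity, $a\in k\setminus\{0\}$. Let $\mathfrak wH_{4n}$ be the weak Hopf algebra generated by $Z,X$ with $Z^{2n+1}=Z$, $ZX=qXZ$, $X^2=0$ and comultiplication $\Delta(Z)=Z\otimes Z+a(1-q^{-2})Z^{n+1}X\otimes ZX$, $\Delta(X)=X\otimes 1+Z^n\otimes X$ (tensor products of modules are formed via $\Delta$). For $i\in\mathbb Z_{2n}$ let $S_i$ be the $1$-dimensional module with $X$ acting by $0$ and $Z$ by $q^i$; $M_i$ the $2$-dimensional module with basis $v_1^i,v_2^i$, $Xv_1^i=v_2^i$, $Xv_2^i=0$, $Zv_1^i=q^iv_1^i$, $Zv_2^i=q^{i+1}v_2^i$; $N_0$ the $1$-dimensional module on which $Z,X$ act by $0$; $N_1$ the $2$-dimensional module with basis $w_1,w_2$, $Xw_1=w_2$, $Xw_2=0$, $Z$ acting by $0$. Then for all $i,j\in\mathbb Z_{2n}$ (indices modulo $2n$): (1) $S_i\otimes S_j\cong S_{i+j}\cong S_j\otimes S_i$; (2) $S_i\otimes M_j\cong M_{i+j}\cong M_j\otimes S_i$; (3) $M_i\otimes M_j\cong M_{i+j}\oplus M_{i+j+1}\cong M_j\otimes M_i$; (4) $N_0\otimes N_0\cong N_0\cong N_0\otimes S_i\cong S_i\otimes N_0$; (5) $N_0\otimes N_1\cong N_0\oplus N_0\cong N_0\otimes M_i$; (6) $N_1\otimes N_0\cong N_1\cong M_i\otimes N_0\cong N_1\otimes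 S_i\cong S_i\otimes N_1$; (7) $N_1\otimes N_1\cong N_1\oplus N_1\cong N_1\otimes M_i\cong M_i\otimes N_1$. *)

(* Defs.v *)
From HB Require Import structures.
From mathcomp Require Import all_boot all_order all_algebra.
From mathcomp Require Export mxtens.
Set Implicit Arguments. Unset Strict Implicit. Unset Printing Implicit Defensive.
Import GRing.Theory.
Local Open Scope ring_scope.

(* A finite-dimensional representation given by the action matrices of the
   generators Z and X on k^d (column-vector convention: v |-> A *m v). *)
Record wmod (k : fieldType) := WMod { wdim : nat; wZ : 'M[k]_wdim; wX : 'M[k]_wdim }.

Definition wiso (k : fieldType) (V W : wmod k) : Prop :=
  exists (P : 'M[k]_(wdim W, wdim V)) (Q : 'M[k]_(wdim V, wdim W)),
    [/\ P *m Q = 1%:M, Q *m P = 1%:M,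
        P *m wZ V = wZ W *m P & P *m wX V = wX W *m P].

Definition wtens (k : fieldType) (n : nat) (q a : k) (V W : wmod k) : wmod k :=
  @WMod k (wdim V * wdim W)
    (wZ V *t wZ W + (a * (1 - q ^- 2)) *: ((wZ V ^+ n.+1 *m wX V) *t (wZ W *m wX W)))
    (wX V *t 1%:M + (wZ V ^+ n) *t wX W).

Definition wsum (k : fieldType) (V W : wmod k) : wmod k :=
  @WMod k (wdim V + wdim W) (block_mx (wZ V) 0 0 (wZ W)) (block_mx (wX V) 0 0 (wX W)).

Definition modS (k : fieldType) (q : k) (i : nat) : wmod k :=
  @WMod k 1 (q ^+ i)%:M 0.

Definition modM (k : fieldType) (q : k) (i : nat) : wmod k :=
  @WMod k 2
    (\matrix_(r < 2, c < 2) (if r == c then q ^+ (i + r) else 0))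
    (\matrix_(r < 2, c < 2) (if (r == 1%N :> nat) && (c == 0%N :> nat) then 1 else 0)).

Definition modN0 (k : fieldType) : wmod k := @WMod k 1 0 0.

Definition modN1 (k : fieldType) : wmod k :=
  @WMod k 2 0
    (\matrix_(r < 2, c < 2) (if (r == 1%N :> nat) && (c == 0%N :> nat) then 1 else 0)).

(* Main.v *)
Require Import Defs.
From HB Require Import structures.
From mathcomp Require Import all_boot all_order all_algebra.
From mathcomp Require Import ring lra.
Import GRing.Theory.
Local Open Scope ring_scope.

Definition mx4 (k : fieldType) (l : seq (seq k)) : 'M[k]_4 :=
  \matrix_(r < 4, c < 4) nth 0 (nth [::] l r) c.
Definition mx2 (k : fieldType) (l : seq (seq k)) : 'M[k]_2 :=
  \matrix_(r < 2, c < 2) nth 0 (nth [::] l r) c.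
Arguments mx4 {k}. Arguments mx2 {k}.
Lemma mul44 (k : fieldType) (a00 a01 a02 a03 a10 a11 a12 a13 a20 a21 a22 a23 a30 a31 a32 a33 b00 b01 b02 b03 b10 b11 b12 b13 b20 b21 b22 b23 b30 b31 b32 b33 : k) :
  mx4 [:: [:: a00; a01; a02; a03]; [:: a10; a11; a12; a13]; [:: a20; a21; a22; a23]; [:: a30; a31; a32; a33]] *m mx4 [:: [:: b00; b01; b02; b03]; [:: b10; b11; b12; b13]; [:: b20; b21; b22; b23]; [:: b30; b31; b32; b33]] = mx4 [:: [:: a00 * b00 + a01 * b10 + a02 * b20 + a03 * b30; a00 * b01 + a01 * b11 + a02 * b21 + a03 * b31; a00 * b02 + a01 * b12 + a02 * b22 + a03 * b32; a00 * b03 + a01 * b13 + a02 * b23 + a03 * b33]; [:: a10 * b00 + a11 * b10 + a12 * b20 + a13 * b30; a10 * b01 + a11 * b11 + a12 * b21 + a13 * b31; a10 * b02 + a11 * b12 + a12 * b22 + a13 * b32; a10 * b03 + a11 * b13 + a12 * b23 + a13 * b33]; [:: a20 * b00 + a21 * b10 + a22 * b20 + a23 * b30; a20 * b01 + a21 * b11 + a22 * b21 + a23 * b31; a20 * b02 + a21 * b12 + a22 * b22 + a23 * b32; a20 * b03 + a21 * b13 + a22 * b23 + a23 * b33]; [:: a30 * b00 + a31 * b10 + a32 * b20 + a33 * b30; a30 * b01 + a31 * b11 + a32 * b21 + a33 * b31; a30 * b02 + a31 * b12 + a32 * b22 + a33 * b32; a30 * b03 + a31 * b13 + a32 * b23 +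 a33 * b33]].
Proof.
apply/matrixP; case=> [[|[|[|[|?]]]] ?] //; case=> [[|[|[|[|?]]]] ?] //;
  rewrite !mxE !big_ord_recr big_ord0 /= !mxE /=; ring.
Qed.

Lemma add44 (k : fieldType) (a00 a01 a02 a03 a10 a11 a12 a13 a20 a21 a22 a23 a30 a31 a32 a33 b00 b01 b02 b03 b10 b11 b12 b13 b20 b21 b22 b23 b30 b31 b32 b33 : k) :
  mx4 [:: [:: a00; a01; a02; a03]; [:: a10; a11; a12; a13]; [:: a20; a21; a22; a23]; [:: a30; a31; a32; a33]] + mx4 [:: [:: b00; b01; b02; b03]; [:: b10; b11; b12; b13]; [:: b20; b21; b22; b23]; [:: b30; b31; b32; b33]] = mx4 [:: [:: (a00 + b00); (a01 + b01); (a02 + b02); (a03 + b03)]; [:: (a10 + b10); (a11 + b11); (a12 + b12); (a13 + b13)]; [:: (a20 + b20); (a21 + b21); (a22 + b22); (a23 + b23)]; [:: (a30 + b30); (a31 + b31); (a32 + b32); (a33 + b33)]].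
Proof.
apply/matrixP; case=> [[|[|[|[|?]]]] ?] //; case=> [[|[|[|[|?]]]] ?] //; rewrite !mxE //.
Qed.

Lemma scale44 (k : fieldType) (x a00 a01 a02 a03 a10 a11 a12 a13 a20 a21 a22 a23 a30 a31 a32 a33 : k) :
  x *: mx4 [:: [:: a00; a01; a02; a03]; [:: a10; a11; a12; a13]; [:: a20; a21; a22; a23]; [:: a30; a31; a32; a33]] = mx4 [:: [:: (x * a00); (x * a01); (x * a02); (x * a03)]; [:: (x * a10); (x * a11); (x * a12); (x * a13)]; [:: (x * a20); (x * a21); (x * a22); (x * a23)]; [:: (x * a30); (x * a31); (x * a32); (x * a33)]].
Proof.
apply/matrixP; case=> [[|[|[|[|?]]]] ?] //; case=> [[|[|[|[|?]]]] ?] //; rewrite !mxE //.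
Qed.

Lemma eq44 (k : fieldType) (a00 a01 a02 a03 a10 a11 a12 a13 a20 a21 a22 a23 a30 a31 a32 a33 b00 b01 b02 b03 b10 b11 b12 b13 b20 b21 b22 b23 b30 b31 b32 b33 : k) (e00 : a00 = b00) (e01 : a01 = b01) (e02 : a02 = b02) (e03 : a03 = b03) (e10 : a10 = b10) (e11 : a11 = b11) (e12 : a12 = b12) (e13 : a13 = b13) (e20 : a20 = b20) (e21 : a21 = b21) (e22 : a22 = b22) (e23 : a23 = b23) (e30 : a30 = b30) (e31 : a31 = b31) (e32 : a32 = b32) (e33 : a33 = b33) :
  mx4 [:: [:: a00; a01; a02; a03]; [:: a10; a11; a12; a13]; [:: a20; a21; a22; a23]; [:: a30; a31; a32; a33]] = mx4 [:: [:: b00; b01; b02; b03]; [:: b10; b11; b12; b13]; [:: b20; b21; b22; b23]; [:: b30; b31; b32; b33]].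
Proof. by rewrite e00 e01 e02 e03 e10 e11 e12 e13 e20 e21 e22 e23 e30 e31 e32 e33. Qed.

Lemma mul22 (k : fieldType) (a00 a01 a10 a11 b00 b01 b10 b11 : k) :
  mx2 [:: [:: a00; a01]; [:: a10; a11]] *m mx2 [:: [:: b00; b01]; [:: b10; b11]] = mx2 [:: [:: a00 * b00 + a01 * b10; a00 * b01 + a01 * b11]; [:: a10 * b00 + a11 * b10; a10 * b01 + a11 * b11]].
Proof.
apply/matrixP; case=> [[|[|?]] ?] //; case=> [[|[|?]] ?] //;
  rewrite !mxE !big_ord_recr big_ord0 /= !mxE /=; ring.
Qed.

Lemma tens22 (k : fieldType) (a00 a01 a10 a11 b00 b01 b10 b11 : k) :
  mx2 [:: [:: a00; a01]; [:: a10; a11]] *t mx2 [:: [:: b00; b01]; [:: b10; b11]] = mx4 [:: [:: a00 * b00; a00 * b01; a01 * b00; a01 * b01]; [:: a00 * b10; a00 * b11; a01 * b10; a01 * b11]; [:: a10 * b00; a10 * b01; a11 * b00; a11 * b01]; [:: a10 * b10; a10 * b11; a11 * b10; a11 * b11]].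
Proof.
apply/matrixP; case=> [[|[|[|[|?]]]] ?] //; case=> [[|[|[|[|?]]]] ?] //;
  rewrite !mxE /divn /modn /= ?mxE //.
Qed.
Definition o0 : 'I_2 := @Ordinal 2 0 isT.
Definition o1 : 'I_2 := @Ordinal 2 1 isT.
Lemma ord2P (i : 'I_2) : i = o0 \/ i = o1.
Proof. case: i => [[|[|i]] H] //; [left|right]; exact: val_inj. Qed.

Lemma blockE (k:fieldType) (A B : 'M[k]_2) : block_mx A 0 0 B =
  mx4 [:: [:: A o0 o0; A o0 o1; 0; 0]; [:: A o1 o0; A o1 o1; 0;0];
          [::0;0;B o0 o0; B o0 o1]; [::0;0;B o1 o0; B o1 o1]].
Proof.
apply/matrixP => r c; rewrite [RHS]mxE [LHS]mxE.
case: splitP => r' Hr; rewrite mxE; case: splitP => c' Hc; rewrite ?mxE Hr Hc;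
case: (ord2P r') => ->; case: (ord2P c') => -> //.
Qed.
Lemma add22 (k : fieldType) (a00 a01 a10 a11 b00 b01 b10 b11 : k) :
  mx2 [:: [:: a00; a01]; [:: a10; a11]] + mx2 [:: [:: b00; b01]; [:: b10; b11]] = mx2 [:: [:: (a00 + b00); (a01 + b01)]; [:: (a10 + b10); (a11 + b11)]].
Proof. apply/matrixP; case=> [[|[|?]] ?] //; case=> [[|[|?]] ?] //; rewrite !mxE //. Qed.

Lemma scale22 (k : fieldType) (x a00 a01 a10 a11 : k) :
  x *: mx2 [:: [:: a00; a01]; [:: a10; a11]] = mx2 [:: [:: (x * a00); (x * a01)]; [:: (x * a10); (x * a11)]].
Proof. apply/matrixP; case=> [[|[|?]] ?] //; case=> [[|[|?]] ?] //; rewrite !mxE //. Qed.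

Lemma eq22 (k : fieldType) (a00 a01 a10 a11 b00 b01 b10 b11 : k) (e00 : a00 = b00) (e01 : a01 = b01) (e10 : a10 = b10) (e11 : a11 = b11) :
  mx2 [:: [:: a00; a01]; [:: a10; a11]] = mx2 [:: [:: b00; b01]; [:: b10; b11]].
Proof. by rewrite e00 e01 e10 e11. Qed.

Lemma tens12 (k : fieldType) (x a00 a01 a10 a11 : k) :
  (x%:M : 'M_1) *t mx2 [:: [:: a00; a01]; [:: a10; a11]] = mx2 [:: [:: (x * a00); (x * a01)]; [:: (x * a10); (x * a11)]].
Proof.
apply/matrixP; case=> [[|[|?]] ?] //; case=> [[|[|?]] ?] //;
  rewrite !mxE /divn /modn /= ?mxE //= mulr1n.
Qed.

Lemma tens21 (k : fieldType) (x a00 a01 a10 a11 : k) :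
  mx2 [:: [:: a00; a01]; [:: a10; a11]] *t (x%:M : 'M_1) = mx2 [:: [:: (a00 * x); (a01 * x)]; [:: (a10 * x); (a11 * x)]].
Proof.
apply/matrixP; case=> [[|[|?]] ?] //; case=> [[|[|?]] ?] //;
  rewrite !mxE /divn /modn /= ?mxE //= mulr1n.
Qed.

Lemma block22 (k : fieldType) (a00 a01 a10 a11 b00 b01 b10 b11 : k) :
  block_mx (mx2 [:: [:: a00; a01]; [:: a10; a11]]) 0 0 (mx2 [:: [:: b00; b01]; [:: b10; b11]]) = mx4 [:: [:: a00; a01; 0; 0]; [:: a10; a11; 0; 0]; [:: 0; 0; b00; b01]; [:: 0; 0; b10; b11]].
Proof. by rewrite blockE /o0 /o1 !mxE. Qed.

Lemma id2 (k : fieldType) : (1%:M : 'M[k]_2) = mx2 [:: [:: 1; 0]; [:: 0; 1]].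
Proof. apply/matrixP; case=> [[|[|?]] ?] //; case=> [[|[|?]] ?] //; rewrite !mxE //. Qed.
Lemma id4 (k : fieldType) : (1%:M : 'M[k]_4) =
  mx4 [:: [:: 1; 0; 0; 0]; [:: 0; 1; 0; 0]; [:: 0; 0; 1; 0]; [:: 0; 0; 0; 1]].
Proof. apply/matrixP; case=> [[|[|[|[|?]]]] ?] //; case=> [[|[|[|[|?]]]] ?] //; rewrite !mxE //. Qed.

Lemma powS (k:fieldType) (x:k) m : ((x%:M : 'M[k]_1) ^+ m) = (x ^+ m)%:M.
Proof. elim: m => [|m IH]; first by rewrite !expr0. by rewrite !exprS IH -mulmxE scalar_mxM. Qed.
Lemma pow0 (k:fieldType) d m : ((0 : 'M[k]_d) ^+ m.+1) = 0.
Proof. by rewrite exprS mul0r. Qed.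

Lemma ZM (k:fieldType) (q:k) i : wZ (modM q i) = mx2 [:: [:: q ^+ i; 0]; [:: 0; q ^+ (i + 1)]].
Proof. apply/matrixP; case=> [[|[|?]] ?] //; case=> [[|[|?]] ?] //; rewrite !mxE ?addn0 //. Qed.
Lemma XM (k:fieldType) (q:k) i : wX (modM q i) = mx2 [:: [:: 0; 0]; [:: 1; 0]].
Proof. apply/matrixP; case=> [[|[|?]] ?] //; case=> [[|[|?]] ?] //; rewrite !mxE //. Qed.
Lemma XN1 (k:fieldType) : wX (modN1 k) = mx2 [:: [:: 0; 0]; [:: 1; 0]].
Proof. apply/matrixP; case=> [[|[|?]] ?] //; case=> [[|[|?]] ?] //; rewrite !mxE //. Qed.
Lemma ZN1 (k:fieldType) : wZ (modN1 k) = 0. Proof. by []. Qed.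
Lemma ZN0 (k:fieldType) : wZ (modN0 k) = 0. Proof. by []. Qed.
Lemma XN0 (k:fieldType) : wX (modN0 k) = 0. Proof. by []. Qed.
Lemma ZS (k:fieldType) (q:k) i : wZ (modS q i) = (q ^+ i)%:M. Proof. by []. Qed.
Lemma XS (k:fieldType) (q:k) i : wX (modS q i) = 0. Proof. by []. Qed.

Lemma powM (k:fieldType) (q:k) i m : (wZ (modM q i)) ^+ m =
  mx2 [:: [:: q ^+ (i * m); 0]; [:: 0; q ^+ ((i + 1) * m)]].
Proof.
elim: m => [|m IH].
  by rewrite expr0 (_ : 1 = 1%:M) // id2 !muln0 !expr0.
by rewrite exprS IH ZM -mulmxE mul22 !mulr0 !mul0r !addr0 !add0r -!exprD !mulnS.
Qed.

Lemma wZT (k:fieldType) n (q a : k) V W : wZ (wtens n q a V W) =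
  (wZ V *t wZ W + (a * (1 - q ^- 2)) *: ((wZ V ^+ n.+1 *m wX V) *t (wZ W *m wX W))).
Proof. by []. Qed.
Lemma wXT (k:fieldType) n (q a : k) V W : wX (wtens n q a V W) =
    (wX V *t 1%:M + (wZ V ^+ n) *t wX W).
Proof. by []. Qed.
Lemma wZS (k:fieldType) (V W : wmod k) : wZ (wsum V W) = block_mx (wZ V) 0 0 (wZ W).
Proof. by []. Qed.
Lemma wXS (k:fieldType) (V W : wmod k) : wX (wsum V W) = block_mx (wX V) 0 0 (wX W).
Proof. by []. Qed.

Lemma wiso_sym (k:fieldType) (V W : wmod k) : wiso V W -> wiso W V.
Proof.
case=> P [Q [PQ QP HZ HX]]; exists Q, P.
have e (A : 'M_(wdim V)) (B : 'M_(wdim W)) : P *m A = B *m P -> Q *m B = A *m Q.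
  move=> H.
  have -> : Q *m B = Q *m B *m (P *m Q) by rewrite PQ mulmx1.
  by rewrite mulmxA -(mulmxA Q B P) -H !mulmxA QP mul1mx.
by split => //; apply: e.
Qed.

Lemma wiso_same (k:fieldType) d (Z1 X1 Z2 X2 : 'M[k]_d) :
  Z1 = Z2 -> X1 = X2 -> wiso (WMod Z1 X1) (WMod Z2 X2).
Proof. move=> -> ->; exists 1%:M, 1%:M; split; by rewrite /= ?mul1mx ?mulmx1. Qed.

Ltac norm := rewrite ?wZT ?wXT ?wZS ?wXS ?ZS ?XS ?ZN0 ?XN0 ?ZN1 ?XN1 ?powM ?ZM ?XM ?powS ?pow0 ?id2 ?id4;
  rewrite ?mul0mx ?mulmx0 ?tens0mx ?tensmx0 ?scaler0 ?addr0 ?add0r ?mul22 ?mul44 ?tens22 ?tens12 ?tens21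
    ?block22 ?block_mx0;
  rewrite ?scale22 ?scale44 ?add22 ?add44 ?mul22 ?mul44.

Lemma iso3 (k:fieldType) n (q a:k) (hq0 : q != 0) (hqn : q ^+ n = -1) i j :
  wiso (wtens n q a (modM q i) (modM q j)) (wsum (modM q (i+j)) (modM q (i+j+1))).
Proof.
exists (mx4 [:: [::1;0;0;0]; [::0;0;1;0]; [::0;1;- q ^+ (i * n);0]; [::a * q ^+ ((i+1) * n);0;0;1]]).
exists (mx4 [:: [::1;0;0;0]; [::0;q ^+ (i * n);1;0]; [::0;1;0;0]; [::- a * q ^+ ((i+1) * n);0;0;1]]).
split; norm; apply: eq44;
  rewrite ?mulnDl ?mulnS ?mul1n ?exprD ?exprS ?expr0 ?hqn; field => //.
Qed.


Lemma tens11 (k : fieldType) (x y : k) : (x%:M : 'M_1) *t (y%:M : 'M_1) = ((x * y)%:M : 'M_1).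
Proof. by apply/matrixP; case=> [[|?] ?] //; case=> [[|?] ?] //; rewrite !mxE /divn /modn /= !mulr1n. Qed.

Ltac same := exists 1%:M, 1%:M; split; rewrite ?mul1mx ?mulmx1 //.
Ltac norm2 := norm; rewrite ?tens11 ?scaler0 ?addr0 ?add0r ?mulr0 ?mul0r ?mul0mx ?mulmx0 ?tens0mx ?tensmx0.

Ltac fin hq0 hqn := rewrite ?mulnDl ?mul1n ?exprD ?hqn ?mulnS ?exprD ?exprS ?expr0 ?hqn; field => //;
   rewrite ?mulf_eq0 ?expf_eq0 ?(negbTE hq0) ?andbF ?orbF //.

Ltac cl hq0 hqn := try done; (apply: eq22 || apply: eq44); fin hq0 hqn.
Section Iso.
Variables (k : fieldType) (n : nat) (q a : k) (hq0 : q != 0) (hqn : q ^+ n.+1 = -1).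
Local Notation T := (wtens n.+1 q a).

Lemma iso1a i j : wiso (T (modS q i) (modS q j)) (modS q (i + j)).
Proof. same; norm2 => //; by rewrite exprD. Qed.
Lemma iso1b i j : wiso (modS q (i + j)) (T (modS q j) (modS q i)).
Proof. same; norm2 => //; by rewrite exprD mulrC. Qed.

Lemma iso2a i j : wiso (T (modS q i) (modM q j)) (modM q (i + j)).
Proof.
exists (mx2 [:: [:: q ^+ i ^+ n.+1; 0]; [:: 0; 1]]).
exists (mx2 [:: [:: (q ^+ i ^+ n.+1)^-1; 0]; [:: 0; 1]]).
split; norm2; apply: eq22; fin hq0 hqn.
Qed.
Lemma iso2b i j : wiso (modM q (i + j)) (T (modM q j) (modS q i)).
Proof. same; norm2; apply: eq22; fin hq0 hqn. Qed.

Lemma iso4a : wiso (T (modN0 k) (modN0 k)) (modN0 k).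
Proof. by same; norm2. Qed.
Lemma iso4b i : wiso (modN0 k) (T (modN0 k) (modS q i)).
Proof. by same; norm2. Qed.
Lemma iso4c i : wiso (T (modN0 k) (modS q i)) (T (modS q i) (modN0 k)).
Proof. by same; norm2. Qed.
Lemma iso5a : wiso (T (modN0 k) (modN1 k)) (wsum (modN0 k) (modN0 k)).
Proof. by same; norm2. Qed.
Lemma iso5b i : wiso (wsum (modN0 k) (modN0 k)) (T (modN0 k) (modM q i)).
Proof. by same; norm2. Qed.
Lemma iso6a : wiso (T (modN1 k) (modN0 k)) (modN1 k).
Proof. same; norm2; cl hq0 hqn. Qed.
Lemma iso6b i : wiso (modN1 k) (T (modM q i) (modN0 k)).
Proof. same; norm2; cl hq0 hqn. Qed.
Lemma iso6c i : wiso (T (modM q i) (modN0 k)) (T (modN1 k) (modS q i)).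
Proof. same; norm2; cl hq0 hqn. Qed.
Lemma iso6d i : wiso (T (modN1 k) (modS q i)) (T (modS q i) (modN1 k)).
Proof.
exists (mx2 [:: [:: 1; 0]; [:: 0; q ^+ i ^+ n.+1]]).
exists (mx2 [:: [:: 1; 0]; [:: 0; (q ^+ i ^+ n.+1)^-1]]).
split; norm2; cl hq0 hqn.
Qed.
Definition swp : 'M[k]_4 := mx4 [:: [:: 1; 0; 0; 0]; [:: 0; 0; 1; 0]; [:: 0; 1; 0; 0]; [:: 0; 0; 0; 1]].
Lemma iso7a : wiso (T (modN1 k) (modN1 k)) (wsum (modN1 k) (modN1 k)).
Proof. exists swp, swp; rewrite /swp; split; norm2; cl hq0 hqn. Qed.
Lemma iso7b i : wiso (wsum (modN1 k) (modN1 k)) (T (modN1 k) (modM q i)).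
Proof. exists swp, swp; rewrite /swp; split; norm2; cl hq0 hqn. Qed.
Lemma iso7c i : wiso (T (modN1 k) (modM q i)) (T (modM q i) (modN1 k)).
Proof.
exists (mx4 [:: [:: 1; 0; 0; 0]; [:: 0; 1; q ^+ (i * n.+1); 0]; [:: 0; 0; 1; 0]; [:: 0; 0; 0; 1]]).
exists (mx4 [:: [:: 1; 0; 0; 0]; [:: 0; 1; - q ^+ (i * n.+1); 0]; [:: 0; 0; 1; 0]; [:: 0; 0; 0; 1]]).
split; norm2; cl hq0 hqn.
Qed.
End Iso.

Lemma prim_facts (k : fieldType) (m : nat) (q : k) (hq : (2 * m.+1).-primitive_root q) :
  q != 0 /\ q ^+ m.+1 = -1.
Proof.
have h1 : q ^+ (2 * m.+1) = 1 by apply: prim_expr_order.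
split.
  apply/eqP => q0; move: h1; rewrite q0 expr0n muln_eq0 /= => /eqP.
  by rewrite eq_sym oner_eq0.
have : (q ^+ m.+1) ^+ 2 == 1 by rewrite -exprM mulnC h1.
rewrite sqrf_eq1 => /orP [|/eqP //].
rewrite -(prim_order_dvd hq) => /dvdn_leq => /(_ isT).
by rewrite -{2}[m.+1]mul1n leq_pmul2r.
Qed.

Lemma modS_mod (k : fieldType) (m : nat) (q : k) (hq : (2 * m.+1).-primitive_root q) x y :
  (x %% (2 * m.+1) = y %% (2 * m.+1))%N -> modS q x = modS q y.
Proof. by move=> e; rewrite /modS -(prim_expr_mod hq x) e prim_expr_mod. Qed.

Lemma modM_mod (k : fieldType) (m : nat) (q : k) (hq : (2 * m.+1).-primitive_root q) x y :
  (x %% (2 * m.+1) = y %% (2 * m.+1))%N -> modM q x = modM q y.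
Proof.
move=> e; rewrite /modM; congr WMod; apply/matrixP => r c; rewrite !mxE.
case: (r == c) => //.
by rewrite -(prim_expr_mod hq (x + r)) -modnDml e modnDml prim_expr_mod.
Qed.

Lemma valZadd (m : nat) (i j : 'Z_(2 * m.+1)) :
  ((nat_of_ord (i + j)%R) %% (2 * m.+1) = (i + j) %% (2 * m.+1))%N.
Proof.
have hc : (Zp_trunc (2 * m.+1)).+2 = (2 * m.+1)%N by apply: Zp_cast; rewrite mulnS.
have h x : (x %% (Zp_trunc (2 * m.+1)).+2 = x %% (2 * m.+1))%N by rewrite hc.
by rewrite [nat_of_ord _]/= h modn_mod.
Qed.

Lemma valZadd1 (m : nat) (i j : 'Z_(2 * m.+1)) :
  ((nat_of_ord (i + j + 1)%R) %% (2 * m.+1) = (i + j + 1) %% (2 * m.+1))%N.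
Proof.
have hc : (Zp_trunc (2 * m.+1)).+2 = (2 * m.+1)%N by apply: Zp_cast; rewrite mulnS.
have h x : (x %% (Zp_trunc (2 * m.+1)).+2 = x %% (2 * m.+1))%N by rewrite hc.
by rewrite [nat_of_ord _]/= h modn_mod !h modnDm.
Qed.

Arguments prim_facts {k m q}.
Arguments valZadd {m}.
Arguments valZadd1 {m}.
Arguments modS_mod {k m q} hq {x y}.
Arguments modM_mod {k m q} hq {x y}.

Theorem theorem4p2 (k : closedFieldType) (hchar : [pchar k] =i pred0)
  (n : nat) (hn : (1 <= n)%N) (q : k) (hq : (2 * n).-primitive_root q)
  (a : k) (ha : a != 0) :
  let S (i : 'Z_(2 * n)) := modS q (nat_of_ord i) in
  let M (i : 'Z_(2 * n)) := modM q (nat_of_ord i) in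
  let N0 := modN0 k in
  let N1 := modN1 k in
  let T := wtens n q a in
  forall i j : 'Z_(2 * n),
  (* (1) *) (wiso (T (S i) (S j)) (S (i + j)) /\ wiso (S (i + j)) (T (S j) (S i))) /\
  (* (2) *) (wiso (T (S i) (M j)) (M (i + j)) /\ wiso (M (i + j)) (T (M j) (S i))) /\
  (* (3) *) (wiso (T (M i) (M j)) (wsum (M (i + j)) (M (i + j + 1)))
             /\ wiso (wsum (M (i + j)) (M (i + j + 1))) (T (M j) (M i))) /\
  (* (4) *) (wiso (T N0 N0) N0 /\ wiso N0 (T N0 (S i)) /\ wiso (T N0 (S i)) (T (S i) N0)) /\
  (* (5) *) (wiso (T N0 N1) (wsum N0 N0) /\ wiso (wsum N0 N0) (T N0 (M i))) /\
  (* (6) *) (wiso (T N1 N0) N1 /\ wiso N1 (T (M i) N0) /\ wiso (T (M i) N0) (T N1 (S i))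
             /\ wiso (T N1 (S i)) (T (S i) N1)) /\
  (* (7) *) (wiso (T N1 N1) (wsum N1 N1) /\ wiso (wsum N1 N1) (T N1 (M i))
             /\ wiso (T N1 (M i)) (T (M i) N1)).
Proof.
case: n hn hq => [//|m] _ hq S M N0 N1 T i j.
have [hq0 hqn] := prim_facts hq.
rewrite /S /M /N0 /N1 /T.
rewrite (modS_mod hq (valZadd i j)) (modM_mod hq (valZadd i j)) (modM_mod hq (valZadd1 i j)).
split; [split|]; first exact: iso1a.
  exact: iso1b.
split; [split|].
  exact: iso2a.
  exact: iso2b.
split; [split|].
  exact: iso3.
  by apply: wiso_sym; rewrite addnC; apply: iso3.
split; [split; [|split]|].
  exact: iso4a. exact: iso4b. exact: iso4c.
split; [split|].
  exact: iso5a. exact: iso5b.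
split; [split; [|split; [|split]]|].
  exact: iso6a. exact: iso6b. exact: iso6c. exact: iso6d.
split; [|split].
  exact: iso7a. exact: iso7b. exact: iso7c.
Qed.
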